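(* Let $X$ be a locally compact separable metrizable space, $Z\subseteq X$ compact, and let $\mathcal U=(\mathfrak P,\{\mathcal U_{\mathfrak p}\},\{\Phi_{\mathfrak p\mathfrak q}\})$ be an abstract good coordinate system of $Z$ in the strong sense, with $\mathcal U_{\mathfrak p}=(U_{\mathfrak p},S_{\mathfrak p},\psi_{\mathfrak p})$. Let $|\mathcal U|=(\coprod_{\mathfrak p}U_{\mathfrak p})/\sim$ with the quotient topology. For each $\mathfrak p$ choose an open $U'_{\mathfrak p}\Subset U_{\mathfrak p}$ and denote also by $U'_{\mathfrak p}$ its image under the natural map $U_{\mathfrak p}\to|\mathcal U|$. Then $U'=\bigcup_{\mathfrak p\in\mathfrak P}U'_{\mathfrak p}\subseteq|\mathcal U|$, equipped with the subspace topology induced from $|\mathcal U|$, is separable and metrizable.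
   Context: An abstract K-chart of $X$ is a triple $(U,S,\psi)$ where $U$ is a locally compact separable metrizable space, $S\subseteq U$ is closed, and $\psi:S\to X$ is a homeomorphism onto an open subset of $X$. Given abstract K-charts $\mathcal U_i=(U_i,S_i,\psi_i)$ ($i=1,2$), a coordinate change from $\mathcal U_1$ to $\mathcal U_2$ is a pair $(U_{21},\varphi_{21})$ with: (1) $U_{21}\subseteq U_1$ open; (2) $\varphi_{21}:U_{21}\to U_2$ a topological embedding; (3) $S_1\cap U_{21}=\varphi_{21}^{-1}(S_2)$ and $\psi_2\circ\varphi_{21}=\psi_1$ on $S_1\cap U_{21}$; (4) $\psi_1(S_1\cap U_{21})=\psi_1(S_1)\cap\psi_2(S_2)$. An abstract good coordinate system of $Z$ in the weak sense is $(\mathfrak P,\{\mathcal U_{\mathfrak p}\},\{\Phi_{\mathfrak p\mathfrak q}\})$ where: (1) $\mathfrak P$ is a finite partially ordered set; (2) each $\mathcal U_{\mathfrak p}=(U_{\mathfrak p},S_{\mathfrak p},\psi_{\mathfrak p})$ is an abstract K-chart; (3) for $\mathfrak q\le\mathfrak p$, $\Phi_{\mathfrak p\mathfrak q}=(U_{\mathfrak p\mathfrak q},\varphi_{\mathfrak p\mathfrak q})$ is a coordinate change from $\mathcal U_{\mathfrak q}$ to $\mathcal U_{\mathfrak p}$, with $U_{\mathfrak p\mathfrak p}=U_{\mathfrak p}$ and $\varphi_{\mathfrak p\mathfrak p}=\mathrm{id}$; (4) if $\mathfrak r\le\mathfrak q\le\mathfrak p$ then $\varphi_{\mathfrak p\mathfrak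 r}=\varphi_{\mathfrak p\mathfrak q}\circ\varphi_{\mathfrak q\mathfrak r}$ on $\varphi_{\mathfrak q\mathfrak r}^{-1}(U_{\mathfrak p\mathfrak q})\cap U_{\mathfrak p\mathfrak r}$; (5) if $\psi_{\mathfrak p}(S_{\mathfrak p})\cap\psi_{\mathfrak q}(S_{\mathfrak q})\neq\emptyset$ then $\mathfrak p\le\mathfrak q$ or $\mathfrak q\le\mathfrak p$; (6) $\bigcup_{\mathfrak p}\psi_{\mathfrak p}(S_{\mathfrak p})\supseteq Z$. On $\coprod_{\mathfrak p}U_{\mathfrak p}$ define a relation $\sim$: for $x\in U_{\mathfrak p}$, $y\in U_{\mathfrak q}$, $x\sim y$ iff (a) $\mathfrak p=\mathfrak q$ and $x=y$, or (b) $\mathfrak p\le\mathfrak q$, $x\in U_{\mathfrak q\mathfrak p}$ and $y=\varphi_{\mathfrak q\mathfrak p}(x)$, or (c) $\mathfrak q\le\mathfrak p$, $y\in U_{\mathfrak p\mathfrak q}$ and $x=\varphi_{\mathfrak p\mathfrak q}(y)$. The system is an abstract good coordinate system of $Z$ in the strong sense if it is one in the weak sense and moreover $\sim$ is an equivalence relation and the quotient $(\coprod_{\mathfrak p}U_{\mathfrak p})/\sim$ with the quotient topology is Hausdorff. For an open subset $V$ of a separable metrizable space $U$, $V\Subset U$ means the closure of $V$ in $U$ is compact. *)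

(* Defs.v *)
From HB Require Import structures.
From mathcomp Require Import all_boot all_order all_algebra.
From mathcomp Require Import all_classical all_reals.
From mathcomp Require Import topology normedtype.
From mathcomp Require Import Rstruct Rstruct_topology.
From Stdlib Require Import Rdefinitions.

Set Implicit Arguments.
Unset Strict Implicit.
Unset Printing Implicit Defensive.
Import Order.TTheory GRing.Theory Num.Theory.
Local Open Scope classical_set_scope.

(* [tau] is the family of open sets of a topology on [T]; [A] is a subset of [T]
   carrying the subspace topology. *)

Definition rel_open {T : Type} (tau : set (set T)) (A W : set T) : Prop :=
  exists O, tau O /\ W = A `&` O.

Definition separable_in {T : Type} (tau : set (set T)) (A : set T) : Prop :=
  exists D : set T, D `<=` A /\ countable D /\
    forall W, rel_open tau A W -> W !=set0 -> (W `&` D) !=set0.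

Definition metrizable_in {T : Type} (tau : set (set T)) (A : set T) : Prop :=
  exists d : T -> T -> Rdefinitions.R,
    (forall x y, A x -> A y -> (0 <= d x y)%R) /\
    (forall x y, A x -> A y -> d x y = 0%R <-> x = y) /\
    (forall x y, A x -> A y -> d x y = d y x) /\
    (forall x y z, A x -> A y -> A z -> (d x z <= d x y + d y z)%R) /\
    (forall W, W `<=` A ->
       (rel_open tau A W <->
        forall x, W x -> exists2 e : Rdefinitions.R, (0 < e)%R &
                    [set y | A y /\ (d x y < e)%R] `<=` W)).

Definition hausdorff_in {T : Type} (tau : set (set T)) (A : set T) : Prop :=
  forall a b, A a -> A b -> a <> b ->
    exists O1 O2, tau O1 /\ tau O2 /\ O1 a /\ O2 b /\ A `&` O1 `&` O2 = set0.

Definition lcsm (X : topologicalType) : Prop :=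
  locally_compact [set: X] /\ separable_in (@open X) setT /\
  metrizable_in (@open X) setT.

Definition embedding_on {S T : topologicalType} (A : set S) (f : S -> T) : Prop :=
  {in A &, injective f} /\ {within A, continuous f} /\
  (forall O : set S, open O -> exists V : set T, open V /\ f @` (A `&` O) = f @` A `&` V).

Definition K_chart {X U : topologicalType} (S : set U) (psi : U -> X) : Prop :=
  lcsm U /\ closed S /\ embedding_on S psi /\ open (psi @` S).

Definition coord_change {X U1 U2 : topologicalType}
  (S1 : set U1) (psi1 : U1 -> X) (S2 : set U2) (psi2 : U2 -> X)
  (U21 : set U1) (phi21 : U1 -> U2) : Prop :=
  open U21 /\ embedding_on U21 phi21 /\
  S1 `&` U21 = U21 `&` phi21 @^-1` S2 /\
  (forall x, S1 x -> U21 x -> psi2 (phi21 x) = psi1 x) /\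
  psi1 @` (S1 `&` U21) = psi1 @` S1 `&` psi2 @` S2.

Unset Implicit Arguments.
Section GCS.
Context (X : topologicalType) (disp : Order.disp_t) (P : finPOrderType disp)
  (U : P -> topologicalType) (S : forall p, set (U p)) (psi : forall p, U p -> X)
  (Ud : forall p q : P, set (U q))        (* Ud p q = U_{pq} ⊆ U_q *)
  (phi : forall p q : P, U q -> U p).     (* phi p q = phi_{pq} : U_{pq} -> U_p *)

Definition gcs_weak (Z : set X) : Prop :=
  (forall p : P, K_chart (S p) (psi p)) /\
  (forall p q : P, (q <= p)%O ->
      coord_change (S q) (psi q) (S p) (psi p) (Ud p q) (phi p q)) /\
  (forall p, Ud p p = setT /\ phi p p = id) /\
  (forall p q r : P, (r <= q)%O -> (q <= p)%O ->
      forall x, Ud q r x -> Ud p q (phi q r x) -> Ud p r x ->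
        phi p r x = phi p q (phi q r x)) /\
  (forall p q : P, (psi p @` S p `&` psi q @` S q) !=set0 ->
      (p <= q)%O \/ (q <= p)%O) /\
  Z `<=` \bigcup_(p in [set: P]) (psi p @` S p).

Definition gcs_rel (x y : {p : P & U p}) : Prop :=
  x = y \/
  ((projT1 x <= projT1 y)%O /\ Ud (projT1 y) (projT1 x) (projT2 x) /\
     projT2 y = phi (projT1 y) (projT1 x) (projT2 x)) \/
  ((projT1 y <= projT1 x)%O /\ Ud (projT1 x) (projT1 y) (projT2 y) /\
     projT2 x = phi (projT1 x) (projT1 y) (projT2 y)).

(* the point of |U| represented by x : its ~-class *)
Definition gcs_cls (x : {p : P & U p}) : set {p : P & U p} := [set y | gcs_rel x y].

(* the carrier of |U| : the set of classes *)
Definition gcs_quot : set (set {p : P & U p}) := range gcs_cls.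

(* quotient topology: O is open iff its preimage in every U_p is open
   (relevant only through O `&` gcs_quot) *)
Definition gcs_qopen (O : set (set {p : P & U p})) : Prop :=
  forall p : P, open [set a : U p | O (gcs_cls (existT _ p a))].

Definition is_equivalence {T : Type} (r : T -> T -> Prop) : Prop :=
  (forall x, r x x) /\ (forall x y, r x y -> r y x) /\
  (forall x y z, r x y -> r y z -> r x z).

Definition gcs_strong (Z : set X) : Prop :=
  gcs_weak Z /\ is_equivalence gcs_rel /\ hausdorff_in gcs_qopen gcs_quot.

Definition gcs_union_image (U' : forall p, set (U p)) : set (set {p : P & U p}) :=
  \bigcup_(p in [set: P]) [set gcs_cls (existT _ p a) | a in U' p].

End GCS.

(* Main.v *)
Require Import Defs.
From HB Require Import structures.
From mathcomp Require Import all_boot all_order all_algebra.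
From mathcomp Require Import all_classical all_reals.
From mathcomp Require Import topology normedtype.
From mathcomp Require Import Rstruct Rstruct_topology ring lra.
Import Order.TTheory GRing.Theory Num.Theory.
Import numFieldNormedType.Exports.
Local Open Scope classical_set_scope.

Local Open Scope ring_scope.
Section metric_seq.
Context {R : realType} {T : topologicalType} (f : nat -> T -> R).
Hypotheses (fc : forall n, continuous (f n)) (f01 : forall n x, 0 <= f n x <= 1)
  (fsep : forall x y, x <> y -> exists n, f n x = 0 /\ f n y = 1)
  (cT : compact [set: T]).

Definition term x y n := `|f n x - f n y| / n.+1%:R.
Definition dS x y := sup (range (term x y)).

Lemma absdiff_le1 n x y : `|f n x - f n y| <= 1.
Proof.
have := f01 n x; have := f01 n y => /andP[h1 h2] /andP[h3 h4].
rewrite ler_norml; apply/andP; split; lra.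
Qed.

Lemma term_ge0 x y n : 0 <= term x y n.
Proof. by rewrite /term divr_ge0. Qed.

Lemma term_le_abs x y n : term x y n <= `|f n x - f n y|.
Proof.
rewrite /term ler_pdivrMr ?ltr0Sn //.
rewrite -{1}[`|_|]mulr1 ler_wpM2l // ?normr_ge0 //.
by rewrite ler1n.
Qed.

Lemma term_le_inv x y n : term x y n <= n.+1%:R^-1.
Proof.
rewrite /term -[X in _ <= X]mul1r ler_wpM2r // ?invr_ge0 ?ler0n //; exact: absdiff_le1.
Qed.

Lemma has_ub_term x y : has_ubound (range (term x y)).
Proof.
exists 1 => _ [n _ <-]; apply: le_trans (term_le_inv x y n) _.
by rewrite invf_le1 ?ltr0Sn // ler1n.
Qed.

Lemma term_le_dS x y n : term x y n <= dS x y.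
Proof. by apply: ub_le_sup; [exact: has_ub_term | exists n]. Qed.

Lemma dS_le x y c : (forall n, term x y n <= c) -> dS x y <= c.
Proof. by move=> h; apply: ge_sup; [exists (term x y 0), 0%N | move=> _ [n _ <-]]. Qed.

Lemma dS_ge0 x y : 0 <= dS x y.
Proof. exact: le_trans (term_ge0 x y 0) (term_le_dS x y 0). Qed.

Lemma dS_xx x : dS x x = 0.
Proof.
apply/eqP; rewrite eq_le dS_ge0 andbT; apply: dS_le => n.
by rewrite /term subrr normr0 mul0r.
Qed.

Lemma term_sym x y n : term x y n = term y x n.
Proof. by rewrite /term distrC. Qed.

Lemma dS_sym x y : dS x y = dS y x.
Proof.
apply/eqP; rewrite eq_le; apply/andP; split; apply: dS_le => n;
  rewrite term_sym; exact: term_le_dS.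
Qed.

Lemma dS_triangle x y z : dS x z <= dS x y + dS y z.
Proof.
apply: dS_le => n; apply: le_trans (lerD (term_le_dS x y n) (term_le_dS y z n)).
rewrite /term -mulrDl ler_wpM2r ?invr_ge0 ?ler0n //.
rewrite (_ : f n x - f n z = (f n x - f n y) + (f n y - f n z)); last by ring.
exact: ler_normD.
Qed.

Lemma dS_eq0 x y : dS x y = 0 -> x = y.
Proof.
move=> h; apply: contrapT => xy; have [n [h1 h2]] := fsep _ _ xy.
have := term_le_dS x y n; rewrite h /term h1 h2 sub0r normrN normr1 mul1r.
by rewrite invr_le0 lern0.
Qed.

Lemma dS_nbhs x e : 0 < e -> nbhs x [set y | dS x y < e].
Proof.
move=> e0; have e20 : 0 < e / 2 by rewrite divr_gt0.
have [N hN] := ltr_add_invr e20; rewrite add0r in hN.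
have hc n : \forall y \near x, `|f n x - f n y| < e / 2.
  by move: (fc n x) => /cvgrPdist_lt /(_ (e/2) e20).
have hV : \forall y \near x, forall n, (n <= N)%N -> `|f n x - f n y| < e / 2.
  elim: N {hN} => [|N IH].
    by apply: filterS (hc 0%N) => y hy n; rewrite leqn0 => /eqP ->.
  apply: filterS (filterI IH (hc N.+1)) => y [h1 h2] n.
  by rewrite leq_eqVlt => /orP[/eqP ->//|]; rewrite ltnS; exact: h1.
apply: filterS hV => y hy /=.
apply: (le_lt_trans (y := e / 2)); last by lra.
apply: dS_le => n; case: (leqP n N) => hn.
  by apply: le_trans (term_le_abs x y n) _; apply/ltW/hy.
apply: le_trans (term_le_inv x y n) _; apply/ltW/(le_lt_trans _ hN).
rewrite lef_pV2 ?posrE ?ltr0Sn // ler_nat ltnS; exact: ltnW.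
Qed.

Lemma dS_ball_open x e : open [set y | dS x y < e].
Proof.
rewrite openE => y /= hy; rewrite /interior /=.
have h0 : 0 < e - dS x y by rewrite subr_gt0.
apply: filterS (@dS_nbhs y _ h0) => z /= hz.
have := dS_triangle x y z; lra.
Qed.

Lemma dS_open_ball (V : set T) x : open V -> V x ->
  exists2 e, 0 < e & forall y, dS x y < e -> V y.
Proof.
move=> oV Vx; apply: contrapT => hn.
have hn' : forall e, 0 < e -> exists y, dS x y < e /\ ~ V y.
  move=> e e0; apply: contrapT => h; apply: hn; exists e => // y hy.
  by apply: contrapT => nV; apply: h; exists y.
pose G := filter_from [set e : R | 0 < e] (fun e => [set y | dS x y < e /\ ~ V y]).
have GF : ProperFilter G.
  apply: filter_from_proper.
    apply: filter_from_filter; first by exists 1; rewrite /= ltr01.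
    move=> a b a0 b0; exists (Num.min a b); first by rewrite /= lt_min a0 b0.
    by move=> y [+ nV]; rewrite lt_min => /andP[h1 h2].
  by move=> e e0; have [y hy] := hn' e e0; exists y.
have [z [_ clz]] := cT G GF (@filterT _ G _).
have [zx|zx] := pselect (z = x).
  subst z; have GS : G [set y | dS x y < 1 /\ ~ V y] by exists 1 => //; rewrite /= ltr01.
  have nV : nbhs x V by apply: open_nbhs_nbhs.
  by have [y [[_ nVy] Vy]] := clz _ _ GS nV.
have [n [h1 h2]] := fsep _ _ (nesym zx).
have hW : nbhs z [set y | `|f n z - f n y| < 1 / 2].
  by move: (fc n z) => /cvgrPdist_lt; apply; lra.
have e0 : 0 < (1/2 : R) / n.+1%:R by rewrite divr_gt0 ?ltr0Sn //; lra.
have GS : G [set y | dS x y < (1/2 : R) / n.+1%:R /\ ~ V y] by exists ((1/2 : R) / n.+1%:R).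
have [y [[hy _] hz]] := clz _ _ GS hW. have := le_lt_trans (term_le_dS x y n) hy.
rewrite /term ltr_pM2r ?invr_gt0 ?ltr0Sn // h1 sub0r normrN => hy'.
move: hz; rewrite h2 => hz.
have := f01 n y => /andP[a b].
move: hy' hz => hy' /= hz. have e1 : `|1 - f n y| = 1 - f n y by rewrite ger0_norm // subr_ge0. rewrite e1 ger0_norm // in hz hy'. clear -hy' hz; lra.
Qed.

End metric_seq.

Lemma urysohn_seq {R : realType} (T : topologicalType) (J : countType) (A B : J -> set T) :
  normal_space T ->
  (forall x y : T, x <> y -> exists j, [/\ A j x, B j y, closed (A j), closed (B j) & A j `&` B j = set0]) ->
  exists f : nat -> T -> R, [/\ (forall n, continuous (f n)), (forall n x, 0 <= f n x <= 1) &
    (forall x y, x <> y -> exists n, f n x = 0 /\ f n y = 1)].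
Proof.
move=> nT hsep.
exists (fun n => match choice.unpickle n with Some j => Urysohn (A j) (B j) | None => fun _ => 0 end).
split.
- move=> n; case: (choice.unpickle n) => [j|]; first exact: Urysohn_continuous.
  by move=> x; exact: cvg_cst.
- move=> n x; case: (choice.unpickle n) => [j|]; last by rewrite lexx ler01.
  have := @Urysohn_range T R (A j) (B j) (Urysohn (A j) (B j) x) (ex_intro2 _ _ x I erefl).
  by rewrite /= in_itv.
- move=> x y xy; have [j [Ax By cA cB AB]] := hsep x y xy.
  exists (choice.pickle j); rewrite choice.pickleK.
  have us := normal_uniform_separator nT cA cB AB.
  split.
    by apply: (@Urysohn_sub0 T R _ _ us); exists x.
  by apply: (@Urysohn_sub1 T R _ _ us); exists y.
Qed.

Definition KT (disp : Order.disp_t) (P : finPOrderType disp) (U : P -> topologicalType)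
  (Ud : forall p q : P, set (U q)) (phi : forall p q : P, U q -> U p)
  (KK : set (set {p : P & U p})) := {x : set {p : P & U p} | KK x}.

Definition KTop (disp : Order.disp_t) (P : finPOrderType disp) (U : P -> topologicalType)
  (Ud : forall p q : P, set (U q)) (phi : forall p q : P, U q -> U p)
  (KK : set (set {p : P & U p})) : set_system (KT disp P U Ud phi KK) :=
  [set V | exists O, gcs_qopen disp P U Ud phi O /\ V = [set k | O (proj1_sig k)]].

HB.instance Definition _ disp P U Ud phi KK := gen_eqMixin (KT disp P U Ud phi KK).
HB.instance Definition _ disp P U Ud phi KK := gen_choiceMixin (KT disp P U Ud phi KK).

Section S.
Context (disp : Order.disp_t) (P : finPOrderType disp) (U : P -> topologicalType)
  (Ud : forall p q : P, set (U q)) (phi : forall p q : P, U q -> U p)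
  (KK : set (set {p : P & U p})).

Lemma KTop_T : KTop disp P U Ud phi KK setT.
Proof.
exists setT; split => //.
move=> p; exact: openT.
Qed.

Lemma KTop_I : setI_closed (KTop disp P U Ud phi KK).
Proof.
move=> A B [O1 [o1 ->]] [O2 [o2 ->]]; exists (O1 `&` O2); split => //.
move=> p; exact: openI (o1 p) (o2 p).
Qed.

Lemma KTop_U (I : Type) (f : I -> set (KT disp P U Ud phi KK)) :
  (forall i, KTop disp P U Ud phi KK (f i)) -> KTop disp P U Ud phi KK (\bigcup_i f i).
Proof.
move=> h; have [g hg] := choice h.
exists (\bigcup_i g i); split.
  move=> p; rewrite [X in open X](_ : _ = \bigcup_i [set a | g i (gcs_cls disp P U Ud phi (existT _ p a))]).
    by apply: bigcup_open => i _; case: (hg i) => + _; apply.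
  by apply/seteqP; split => a [i _ h1]; exists i.
apply/seteqP; split => k.
  by case=> i _; case: (hg i) => _ ->; exists i.
by case=> i _ gi; exists i => //; case: (hg i) => _ ->.
Qed.

End S.

HB.instance Definition _ disp P U Ud phi KK :=
  isOpenTopological.Build (KT disp P U Ud phi KK) (@KTop_T disp P U Ud phi KK)
   (@KTop_I disp P U Ud phi KK) (@KTop_U disp P U Ud phi KK).

Section S2.
Context (disp : Order.disp_t) (P : finPOrderType disp) (U : P -> topologicalType)
  (Ud : forall p q : P, set (U q)) (phi : forall p q : P, U q -> U p)
  (KK : set (set {p : P & U p})).
Local Notation K := (KT disp P U Ud phi KK).
Local Notation cls := (gcs_cls disp P U Ud phi).
Local Notation qopen := (gcs_qopen disp P U Ud phi).
Lemma openKE (V : set K) : open V = KTop disp P U Ud phi KK V.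
Proof. reflexivity. Qed.
Lemma nbhsKE (k : K) (V : set K) : nbhs k V = exists B, [/\ KTop disp P U Ud phi KK B, B k & B `<=` V].
Proof. reflexivity. Qed.

Definition imK (p : P) (C : set (U p)) : set K :=
  [set k | exists2 a, C a & sval k = cls (existT _ p a)].

Lemma imK_compact (p : P) (C : set (U p)) : compact C ->
  (forall a, C a -> KK (cls (existT _ p a))) -> compact (imK p C).
Proof.
move=> cC hK F PF FA.
pose pre (B : set K) := [set a | C a /\ exists2 k, B k & sval k = cls (existT _ p a)].
pose G := filter_from F pre.
have GF : ProperFilter G.
  apply: filter_from_proper.
  - apply: filter_from_filter; first by exists setT; exact: filterT.
    move=> B1 B2 F1 F2; exists (B1 `&` B2); first exact: filterI.
    by move=> a [Ca [k [k1 k2] e]]; split; split => //; exists k.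
  - move=> B FB; have [k [Bk [a Ca e]]] := filter_ex (filterI FB FA).
    by exists a; split => //; exists k.
have GC : G C by exists setT; [exact: filterT | move=> a []].
have [a [Ca cla]] := cC G GF GC.
exists (exist _ (cls (existT _ p a)) (hK a Ca)); split; first by exists a.
move=> B V FB; rewrite nbhsKE => -[W [[O [oO ->]] Oa WV]].
have : nbhs a [set a' | O (cls (existT _ p a'))].
  by apply: open_nbhs_nbhs; split => //; exact: oO.
move=> /(cla (pre B)) [|a' [[Ca' [k Bk e]] Oa']].
  by exists B.
by exists k; split => //; apply: WV => /=; rewrite e.
Qed.

Lemma sval_inj (x y : K) : sval x = sval y -> x = y.
Proof. by case: x => x hx; case: y => y hy /= e; subst y; congr exist; exact: Prop_irrelevance. Qed.

Lemma K_hausdorff : KK `<=` gcs_quot disp P U Ud phi ->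
  hausdorff_in qopen (gcs_quot disp P U Ud phi) -> hausdorff_space K.
Proof.
move=> KKq hs; rewrite open_hausdorff => x y xy.
have [O1 [O2 [o1 [o2 [O1x [O2y e]]]]]] := hs (sval x) (sval y)
  (KKq _ (svalP x)) (KKq _ (svalP y)) (fun h => (negP xy) (introT eqP (@sval_inj x y h))).
exists ([set k : K | O1 (sval k)], [set k : K | O2 (sval k)]).
  by rewrite !inE.
split.
- by exists O1.
- by exists O2.
- apply/eqP/seteqP; split => // k [/= k1 k2].
  have : (gcs_quot disp P U Ud phi `&` O1 `&` O2) (sval k).
    by split => //; split => //; apply: KKq; exact: svalP.
  by rewrite e.
Qed.


Lemma K_compact (C : forall p, set (U p)) : (forall p, compact (C p)) ->
  (forall x, KK x -> exists p a, C p a /\ x = cls (existT _ p a)) ->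
  (forall p a, C p a -> KK (cls (existT _ p a))) ->
  compact [set: K].
Proof.
move=> cC hKK hKK'.
have -> : [set: K] = \big[setU/set0]_(p <- enum P) imK p (C p).
  apply/seteqP; split => // k _.
  have [p [a [Ca e]]] := hKK _ (svalP k).
  have : p \in enum P by rewrite mem_enum.
  elim: (enum P) => // q s IH; rewrite big_cons inE => /orP[/eqP <-|/IH h].
    by left; exists a.
  by right.
apply: bigsetU_compact => p _; apply: imK_compact => //; exact: hKK'.
Qed.

End S2.

Section Met.
Context (Y : topologicalType) (d : Y -> Y -> Rdefinitions.R).
Hypotheses (dsym : forall x y, d x y = d y x)
  (dtri : forall x y z, d x z <= d x y + d y z)
  (d0 : forall x, d x x = 0)
  (hm : forall W, W `<=` setT -> (rel_open open setT W <->
     forall x, W x -> exists2 e : Rdefinitions.R, 0 < e & [set y | setT y /\ d x y < e] `<=` W)).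

Lemma met_ball_in (W : set Y) a : open W -> W a ->
  exists2 e : Rdefinitions.R, 0 < e & forall w, d a w < e -> W w.
Proof.
move=> oW Wa; have [h _] := hm W (fun _ _ => I).
have [|e e0 he] := h _ a Wa; first by exists W; rewrite setTI.
by exists e => // w dw; apply: he.
Qed.

Lemma met_from (W : set Y) : (forall x, W x -> exists2 e : Rdefinitions.R, 0 < e & forall y, d x y < e -> W y) ->
  open W.
Proof.
move=> h; have [_ h2] := hm W (fun _ _ => I).
have [|O [oO eO]] := h2.
  by move=> x /h [e e0 he]; exists e => // y [_ /he].
by rewrite eO setTI.
Qed.

Lemma met_ball_open a (r : Rdefinitions.R) : open [set w | d a w < r].
Proof.
apply: met_from => x /= hx; exists (r - d a x); first by rewrite subr_gt0.
move=> y hy; have := dtri a x y; lra.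
Qed.

Lemma met_cball_closed a (r : Rdefinitions.R) : closed [set w | d a w <= r].
Proof.
rewrite -openC; apply: met_from => x /= hx.
have hx' : r < d a x by rewrite ltNge; apply/negP.
exists (d a x - r); first by rewrite subr_gt0.
move=> y hy /= hy'; have := dtri a y x; rewrite (dsym y x); lra.
Qed.

End Met.

Lemma aux3 (a b c t e : Rdefinitions.R) : t < e/2 -> b < t -> c <= t -> a <= b + c -> a < e.
Proof. move=> *; lra. Qed.

Section Main.
Context (disp : Order.disp_t) (P : finPOrderType disp) (U : P -> topologicalType)
  (Ud : forall p q : P, set (U q)) (phi : forall p q : P, U q -> U p).
Local Notation cls := (gcs_cls disp P U Ud phi).
Local Notation qopen := (gcs_qopen disp P U Ud phi).
Local Notation quot := (gcs_quot disp P U Ud phi).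
Context (d : forall p, U p -> U p -> Rdefinitions.R) (D : forall p, set (U p))
  (g : forall p, U p -> nat) (C : forall p, set (U p)).
Hypotheses (dsym : forall p x y, d p x y = d p y x)
  (dtri : forall p x y z, d p x z <= d p x y + d p y z)
  (d0 : forall p x, d p x x = 0)
  (hm : forall p (W : set (U p)), W `<=` setT -> (rel_open open setT W <->
     forall x, W x -> exists2 e : Rdefinitions.R, 0 < e & [set y | setT y /\ d p x y < e] `<=` W))
  (hD : forall p (W : set (U p)), rel_open open setT W -> W !=set0 -> (W `&` D p) !=set0)
  (hg : forall p x y, D p x -> D p y -> g p x = g p y -> x = y)
  (hC : forall p, compact (C p))
  (hs : hausdorff_in qopen quot).

Definition KK0 : set (set {p : P & U p}) := [set x | exists p a, C p a /\ x = cls (existT _ p a)].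
Local Notation K := (KT disp P U Ud phi KK0).

Lemma KK0q : KK0 `<=` quot.
Proof. by move=> x [p [a [_ ->]]]; exists (existT _ p a). Qed.

Lemma K0_hausdorff : hausdorff_space K.
Proof. exact: (K_hausdorff disp P U Ud phi KK0 KK0q hs). Qed.

Lemma K0_compact : compact [set: K].
Proof.
apply: (K_compact disp P U Ud phi KK0 C hC) => //.
by move=> p a Ca; exists p, a.
Qed.

Definition Bset p n m : set (U p) :=
  [set w | C p w /\ exists x, [/\ D p x, g p x = n & d p x w <= (m.+1%:R)^-1]].

Lemma Bset_compact p n m : compact (Bset p n m).
Proof.
case: (pselect (exists x, D p x /\ g p x = n)) => [[x0 [Dx0 gx0]]|nx].
  have -> : Bset p n m = C p `&` [set w | d p x0 w <= (m.+1%:R)^-1].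
    apply/seteqP; split => w.
      by case=> Cw [x [Dx gx dx]]; split => //; have <- := hg _ _ _ Dx Dx0 (etrans gx (esym gx0)).
    by case=> Cw dw; split => //; exists x0.
  apply: compact_closedI (hC p) _; exact: (@met_cball_closed _ (d p) (dsym p) (dtri p) (hm p)).
have -> : Bset p n m = set0.
  by apply/seteqP; split => // w [_ [x [Dx gx _]]]; apply: nx; exists x.
exact: compact0.
Qed.

Lemma pick_B p (O : set (set {p : P & U p})) a : qopen O -> O (cls (existT _ p a)) -> C p a ->
  exists n m, Bset p n m a /\ forall w, Bset p n m w -> O (cls (existT _ p w)).
Proof.
move=> oO Oa Ca.
have [e e0 he] := @met_ball_in _ (d p) (hm p) _ a (oO p) Oa.
have e20 : 0 < e / 2 by rewrite divr_gt0.
have [m hm'] := ltr_add_invr e20; rewrite add0r in hm'.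
have hr : rel_open open setT [set w | d p a w < (m.+1%:R)^-1].
  by exists [set w | d p a w < (m.+1%:R)^-1]; split; [exact: (@met_ball_open _ (d p) (dtri p) (hm p)) | rewrite setTI].
have hne : [set w | d p a w < (m.+1%:R)^-1] !=set0.
  by exists a => /=; rewrite d0 invr_gt0 ltr0Sn.
have [x0 [/= dx0 Dx0]] := hD p _ hr hne.
exists (g p x0), m; split.
  by split => //; exists x0; split => //; rewrite dsym; apply: ltW.
move=> w [Cw [x [Dx gx dx]]]; have ex := hg _ _ _ Dx Dx0 gx; subst x.
apply: he; exact: (aux3 _ _ _ _ _ hm' dx0 dx (dtri p a x0 w)).
Qed.

Definition Aset (t : P * nat * nat) : set K :=
  imK disp P U Ud phi KK0 t.1.1 (Bset t.1.1 t.1.2 t.2).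

Lemma Aset_closed t : closed (Aset t).
Proof.
apply: compact_closed; first exact: K0_hausdorff.
apply: imK_compact; first exact: Bset_compact.
by move=> a [Ca _]; exists t.1.1, a.
Qed.

Lemma K_sep (x y : K) : x <> y -> exists j : ((P * nat * nat) * (P * nat * nat))%type,
  [/\ Aset j.1 x, Aset j.2 y, closed (Aset j.1), closed (Aset j.2) & Aset j.1 `&` Aset j.2 = set0].
Proof.
move=> xy.
have [p [a [Ca ex]]] := svalP x.
have [q [b [Cb ey]]] := svalP y.
have nxy : sval x <> sval y by move=> h; apply: xy; exact: (@sval_inj disp P U Ud phi KK0 x y h).
have [O1 [O2 [o1 [o2 [O1x [O2y e]]]]]] := hs (sval x) (sval y) (KK0q _ (svalP x)) (KK0q _ (svalP y)) nxy.
rewrite ex in O1x; rewrite ey in O2y.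
have [n [m [Ba hB]]] := pick_B _ _ _ o1 O1x Ca.
have [n' [m' [Bb hB']]] := pick_B _ _ _ o2 O2y Cb.
exists ((p, n, m), (q, n', m')); split.
- by exists a.
- by exists b.
- exact: Aset_closed.
- exact: Aset_closed.
- apply/seteqP; split => // k [[w Bw ew] [w' Bw' ew']].
  have : (quot `&` O1 `&` O2) (sval k).
    split; first split.
    + exact: KK0q _ (svalP k).
    + by rewrite ew; apply: hB.
    + by rewrite ew'; apply: hB'.
  by rewrite e.
Qed.

Lemma main_metric (A : set (set {p : P & U p})) : A `<=` KK0 -> metrizable_in qopen A.
Proof.
move=> hA.
have nK : normal_space K by apply: compact_normal; [exact: K0_hausdorff | exact: K0_compact].
have [f [fc f01 fsep]] := @urysohn_seq Rdefinitions.R K _ (fun j => Aset j.1) (fun j => Aset j.2) nK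
  (fun x y xy => K_sep x y xy).
pose dd (x y : set {p : P & U p}) : Rdefinitions.R :=
  match pselect (KK0 x), pselect (KK0 y) with
  | left hx, left hy => dS f (exist _ x hx) (exist _ y hy)
  | _, _ => 0 end.
have hd : forall x y (hx : KK0 x) (hy : KK0 y), dd x y = dS f (exist _ x hx) (exist _ y hy).
  move=> x y hx hy; rewrite /dd; case: pselect => [hx'|/(_ hx)[]]; case: pselect => [hy'|/(_ hy)[]].
  by rewrite (Prop_irrelevance hx' hx) (Prop_irrelevance hy' hy).
exists dd; split; [|split; [|split; [|split]]].
- move=> x y Ax Ay; rewrite (hd _ _ (hA _ Ax) (hA _ Ay)); apply/RleP; exact (dS_ge0 f f01 _ _).
- move=> x y Ax Ay; rewrite (hd _ _ (hA _ Ax) (hA _ Ay)); split.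
    by move/(dS_eq0 f f01 fsep) => /(congr1 sval).
  by move=> exy; subst y; rewrite (Prop_irrelevance (hA _ Ay) (hA _ Ax)) (dS_xx f f01).
- move=> x y Ax Ay; rewrite (hd _ _ (hA _ Ax) (hA _ Ay)) (hd _ _ (hA _ Ay) (hA _ Ax)).
  exact: (dS_sym f f01).
- move=> x y z Ax Ay Az; rewrite (hd _ _ (hA _ Ax) (hA _ Az)) (hd _ _ (hA _ Ax) (hA _ Ay)).
  rewrite (hd _ _ (hA _ Ay) (hA _ Az)); apply/RleP; exact: (dS_triangle f f01).
- move=> W hWA; split.
- case=> O [oO ->] x [Ax Ox].
  have oV : open [set k : K | O (sval k)] by exists O.
  have [e e0 he] := dS_open_ball f fc f01 fsep K0_compact _ (exist _ x (hA _ Ax)) oV Ox.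
  exists e; first exact/RltP.
  move=> y [Ay /RltP dy]; split => //.
  by have := he (exist _ y (hA _ Ay)); rewrite -(hd _ _ (hA _ Ax) (hA _ Ay)); apply.
- move=> h.
  pose O := [set c | exists (kx : K) (e : Rdefinitions.R) (O' : set (set {p : P & U p})),
    [/\ 0 < e, [set y | A y /\ Rdefinitions.RbaseSymbolsImpl.Rlt (dd (sval kx) y) e] `<=` W, qopen O',
        [set k : K | O' (sval k)] = [set k | dS f kx k < e] & O' c]].
  exists O; split.
    move=> p; rewrite openE => a [kx [e [O' [e0 sub oO' eqO' O'a]]]].
    apply: (@filterS _ _ _ [set a | O' (cls (existT _ p a))]).
      by move=> a' O'a'; exists kx, e, O'.
    by apply: open_nbhs_nbhs; split => //; exact: oO'.
  apply/seteqP; split.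
    move=> x Wx; have Ax := hWA _ Wx; split => //.
    have [e /RltP e0 sub] := h x Wx.
    have [O' [oO' eqO']] := dS_ball_open f fc f01 (exist _ x (hA _ Ax)) e.
    exists (exist _ x (hA _ Ax)), e, O'; split => //.
    have : [set k : K | O' (sval k)] (exist _ x (hA _ Ax)).
      by rewrite -eqO' /= (dS_xx f f01).
    by [].
  move=> c [Ac [kx [e [O' [e0 sub oO' eqO' O'c]]]]].
  apply: sub; split => //; apply/RltP.
  have : [set k | dS f kx k < e] (exist _ c (hA _ Ac)) by rewrite -eqO'.
  rewrite /= (hd _ _ (svalP kx) (hA _ Ac)).
  have sE : forall k : K, exist _ (sval k) (svalP k) = k by move=> k; apply: (@sval_inj disp P U Ud phi KK0).
  by rewrite sE.
Qed.

End Main.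

Lemma metr_conv (Y : topologicalType) : metrizable_in (@open Y) setT ->
  exists d : Y -> Y -> Rdefinitions.R, [/\ (forall x y, d x y = d y x),
    (forall x y z, d x z <= d x y + d y z), (forall x, d x x = 0) &
    (forall W, W `<=` setT -> (rel_open open setT W <->
     forall x, W x -> exists2 e : Rdefinitions.R, 0 < e & [set y | setT y /\ d x y < e] `<=` W))].
Proof.
case=> d [h0 [h1 [h2 [h3 h4]]]]; exists d; split.
- by move=> x y; apply: h2.
- by move=> x y z; apply/RleP; apply: h3.
- by move=> x; apply: (h1 x x I I).2.
- move=> W sW; rewrite h4 //; split => h x Wx; have [e e0 he] := h x Wx;
    exists e.
  + exact/RltP.
  + by move=> y [_ /RltP dy]; apply: he.
  + exact/RltP.
  + by move=> y [_ /RltP dy]; apply: he.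
Qed.

Lemma union_sep (disp : Order.disp_t) (P : finPOrderType disp) (U : P -> topologicalType)
  (Ud : forall p q : P, set (U q)) (phi : forall p q : P, U q -> U p)
  (U' : forall p, set (U p)) (D : forall p, set (U p)) :
  (forall p, open (U' p)) -> (forall p, countable (D p)) ->
  (forall p (W : set (U p)), rel_open open setT W -> W !=set0 -> (W `&` D p) !=set0) ->
  separable_in (gcs_qopen disp P U Ud phi) (gcs_union_image disp P U Ud phi U').
Proof.
move=> oU' cD hD.
exists (\bigcup_(p in setT) [set gcs_cls disp P U Ud phi (existT _ p a) | a in D p `&` U' p]).
split; [|split].
- by move=> x [p _ [a [Da U'a] <-]]; exists p => //; exists a.
- apply: bigcup_countable => // p _.
  apply: card_le_trans (card_image_le _ _) _.
  apply: card_le_trans (subset_card_le (@subIsetl _ _ _)) _.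
  exact: cD.
- move=> W [O [oO ->]] [x [[p _ [a U'a <-]] Ox]].
  have hr : rel_open open setT (U' p `&` [set a | O (gcs_cls disp P U Ud phi (existT _ p a))]).
    by eexists; split; [apply: openI; [exact: oU' | exact: oO] | rewrite setTI].
  have [a' [[U'a' Oa'] Da']] := hD p _ hr (ex_intro _ a (conj U'a Ox)).
  exists (gcs_cls disp P U Ud phi (existT _ p a')); split.
    by split => //; exists p => //; exists a'.
  by exists p => //; exists a'.
Qed.

Local Close Scope ring_scope.

Theorem proposition2p11 (X : topologicalType) (disp : Order.disp_t)
  (P : finPOrderType disp) (U : P -> topologicalType)
  (S : forall p : P, set (U p)) (psi : forall p : P, U p -> X)
  (Ud : forall p q : P, set (U q)) (phi : forall p q : P, U q -> U p)
  (Z : set X) (U' : forall p : P, set (U p)) :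
  lcsm X -> compact Z ->
  gcs_strong X disp P U S psi Ud phi Z ->
  (forall p : P, open (U' p) /\ compact (closure (U' p))) ->
  separable_in (gcs_qopen disp P U Ud phi) (gcs_union_image disp P U Ud phi U') /\
  metrizable_in (gcs_qopen disp P U Ud phi) (gcs_union_image disp P U Ud phi U').
Proof.
move=> _ _ [[hch _] [_ hs]] hU'.
have lc p : lcsm (U p) by case: (hch p).
have hsep p : separable_in (@open (U p)) setT by case: (lc p) => _ [].
have hmet p := @metr_conv (U p) (proj2 (proj2 (lc p))).
pose D := fun p => sval (cid (hsep p)).
have hD p : [/\ D p `<=` setT, countable (D p) &
   forall W, rel_open open setT W -> W !=set0 -> (W `&` D p) !=set0].
  by have [? [? ?]] := svalP (cid (hsep p)).
have hg0 p : exists g : U p -> nat, {in D p &, injective g}.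
  by apply/countable_injP; case: (hD p).
pose g := fun p => sval (cid (hg0 p)).
pose d := fun p => sval (cid (hmet p)).
have hd p := svalP (cid (hmet p)).
split.
  apply: (union_sep disp P U Ud phi U' D).
  - by move=> p; case: (hU' p).
  - by move=> p; case: (hD p).
  - by move=> p; case: (hD p).
apply: (main_metric disp P U Ud phi d D g (fun p => closure (U' p))).
- by move=> p; case: (hd p).
- by move=> p; case: (hd p).
- by move=> p; case: (hd p).
- by move=> p; case: (hd p).
- by move=> p; case: (hD p).
- move=> p x y Dx Dy e; have hi := svalP (cid (hg0 p)).
  by apply: hi => //; rewrite inE.
- by move=> p; case: (hU' p).
- exact: hs.
- move=> x [p _ [a U'a <-]]; exists p, a; split => //.
  exact: subset_closure.
Qed.
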